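(* Let $M$ be a left cancellative monoid which is strongly $\delta$-hyperbolic (for some real $\delta \geq 0$) with respect to some finite generating set. Then $M$ is finitely presented, and (any finite presentation of) $M$ has Dehn function bounded above by a polynomial of degree $\log_{4/3} 5 + 1$.
   Context: Directed graphs may have loops and multiple edges. For vertices $u,v$ of a directed graph, $d(u,v)$ is the length of a shortest directed path from $u$ to $v$, or $\infty$ if there is none. The out-ball is $\overrightarrow{\mathcal{B}}_r(x)=\{y : d(x,y)\le r\}$ and the in-ball is $\overleftarrow{\mathcal{B}}_r(x)=\{y : d(y,x)\le r\}$; for a set $S$ of vertices these denote the unions over $x\in S$. A path of length $n$ is a sequence $[x_0,\dots,x_n]$ of vertices with an edge from $x_i$ to $x_{i+1}$ for each $i$; it is a geodesic if $n=d(x_0,x_n)$. Paths $p,q$ are composable if the end of $p$ is the start of $q$ (then $p\circ q$ is their concatenation), and parallel if they have the same start and the same end. A directed geodesic triangle is an ordered triple $(p,q,r)$ of geodesics with $p,q$ composable and $p\circ q$ parallel to $r$. It is $\delta$-thin if (identifying a path with its vertex set) every vertex of $r$ lies in $\overrightarrow{\mathcal{B}}_\delta(p)\cup\overleftarrow{\mathcal{B}}_\delta(q)$, every vertex of $p$ lies in $\overrightarrow{\mathcal{B}}_\delta(r)\cup\overleftarrow{\mathcal{B}}_\delta(q)$, and every vertex of $q$ lies in $\overrightarrow{\mathcal{B}}_\delta(p)\cup\overleftarrow{\mathcal{B}}_\delta(r)$. A directed graph is strongly $\delta$-hyperbolic if all its directed geodesic triangles are $\delta$-thin. For a monoid $M$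 generated by a finite set $A$, the right Cayley graph has vertex set $M$ and an edge from $m$ to $n$ for each $a\in A$ with $ma=n$; $M$ is strongly $\delta$-hyperbolic with respect to $A$ if this graph is strongly $\delta$-hyperbolic. For a monoid presentation $\langle A\mid R\rangle$ and words $u,v$ equal in the monoid, the area $A(u,v)$ is the least number of applications of relations from $R$ needed to transform $u$ into $v$; the Dehn function is $n\mapsto\max\{A(u,v) : u,v\in A^*, u=v \text{ in the monoid}, |u|+|v|\le n\}$. Dehn functions are compared up to the equivalence $f\sim g$ where $f\prec g$ means $f(j)\le a g(aj)+aj$ for some constant $a$ and all $j$; Dehn functions of different finite presentations of the same monoid are equivalent. *)

(* Defs.v *)
From Stdlib Require Import Reals.
From Stdlib Require List.
From mathcomp Require Import all_boot.

Set Implicit Arguments.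
Unset Strict Implicit.
Unset Printing Implicit Defensive.

Record monoid := Monoid {
  mcar :> Type;
  mmul : mcar -> mcar -> mcar;
  mone : mcar;
  mmulA : forall x y z, mmul x (mmul y z) = mmul (mmul x y) z;
  mmul1 : forall x, mmul mone x = x;
  mmulm1 : forall x, mmul x mone = x }.

Definition left_cancellative (M : monoid) : Prop :=
  forall m a b : M, mmul m a = mmul m b -> a = b.

Definition evalw (M : monoid) (B : Type) (gen : B -> M) (w : seq B) : M :=
  foldr (fun b m => mmul (gen b) m) (mone M) w.

Definition generates (M : monoid) (A : finType) (gen : A -> M) : Prop :=
  forall m : M, exists w : seq A, evalw gen w = m.

Section Cayley.
Variables (M : monoid) (A : finType) (gen : A -> M).

Definition cedge (x y : M) : Prop := exists a : A, mmul x (gen a) = y.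

Fixpoint cpath (x : M) (s : seq M) : Prop :=
  match s with
  | [::] => True
  | y :: s' => cedge x y /\ cpath y s'
  end.

(* A path [x_0,...,x_n] is represented as (x_0, [x_1;...;x_n]). *)
Definition gpath := (M * seq M)%type.
Definition pstart (p : gpath) : M := p.1.
Definition pend (p : gpath) : M := last p.1 p.2.
Definition plen (p : gpath) : nat := size p.2.
Definition verts (p : gpath) : seq M := p.1 :: p.2.

Definition dist_le (x y : M) (n : nat) : Prop :=
  exists s, cpath x s /\ last x s = y /\ (size s <= n)%N.

Definition geodesic (p : gpath) : Prop :=
  cpath p.1 p.2 /\
  forall s, cpath p.1 s -> last p.1 s = pend p -> (plen p <= size s)%N.

Definition in_out_ball (delta : R) (p : gpath) (y : M) : Prop :=
  exists x, List.In x (verts p) /\ exists n : nat, Rle (INR n) delta /\ dist_le x y n.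

Definition in_in_ball (delta : R) (p : gpath) (y : M) : Prop :=
  exists x, List.In x (verts p) /\ exists n : nat, Rle (INR n) delta /\ dist_le y x n.

Definition geodesic_triangle (p q r : gpath) : Prop :=
  geodesic p /\ geodesic q /\ geodesic r /\
  pend p = pstart q /\ pstart r = pstart p /\ pend r = pend q.

Definition thin_triangle (delta : R) (p q r : gpath) : Prop :=
  (forall v, List.In v (verts r) -> in_out_ball delta p v \/ in_in_ball delta q v) /\
  (forall v, List.In v (verts p) -> in_out_ball delta r v \/ in_in_ball delta q v) /\
  (forall v, List.In v (verts q) -> in_out_ball delta p v \/ in_in_ball delta r v).

Definition strongly_hyperbolic (delta : R) : Prop :=
  forall p q r, geodesic_triangle p q r -> thin_triangle delta p q r.

End Cayley.

Section Presentations.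
Variable B : Type.

Definition one_step (R : seq (seq B * seq B)) (u v : seq B) : Prop :=
  exists (x y l r : seq B),
    (List.In (l, r) R \/ List.In (r, l) R) /\ u = x ++ l ++ y /\ v = x ++ r ++ y.

Inductive derives (R : seq (seq B * seq B)) : nat -> seq B -> seq B -> Prop :=
  | derives0 u : derives R 0 u u
  | derivesS k u v w : one_step R u v -> derives R k v w -> derives R k.+1 u w.

Definition area_le (R : seq (seq B * seq B)) (u v : seq B) (k : nat) : Prop :=
  exists k', (k' <= k)%N /\ derives R k' u v.

End Presentations.

(* A finite monoid presentation <B | R> of M: B finite, R finite, and the
   map B* -> M induced by pgen is surjective with kernel the congruence
   generated by R. *)
Record fin_presentation (M : monoid) := FinPresentation {
  palph : finType;
  pgen : palph -> M;
  prels : seq (seq palph * seq palph);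
  pgen_surj : forall m : M, exists w, evalw pgen w = m;
  pker : forall u v : seq palph,
           evalw pgen u = evalw pgen v <-> exists k, derives prels k u v }.

(* The Dehn function D of P satisfies D ≺ g, i.e. D(j) <= a g(a j) + a j.
   Written out: every area A(u,v) with |u|+|v| <= j is at most that bound. *)
Definition dehn_prec (M : monoid) (P : fin_presentation M) (g : R -> R) : Prop :=
  exists a : R, Rlt 0 a /\
    forall (j : nat) (u v : seq (palph P)),
      (size u + size v <= j)%N -> evalw (pgen (f:=P)) u = evalw (pgen (f:=P)) v ->
      exists k : nat, area_le (prels P) u v k /\
        Rle (INR k) (Rplus (Rmult a (g (Rmult a (INR j)))) (Rmult a (INR j))).

Definition dehn_exponent : R := Rplus (Rdiv (ln (INR 5)) (ln (Rdiv (INR 4) (INR 3)))) (INR 1).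

(* Main.v *)
Require Import Defs.
From Stdlib Require Import Reals.
From mathcomp Require Import all_boot.
From mathcomp Require Import zify.
From Stdlib Require Import ClassicalEpsilon Lia Lra.

Set Implicit Arguments.
Unset Strict Implicit.
Unset Printing Implicit Defensive.

Section Deriv.
Variable B : Type.
Implicit Types (Rl : seq (seq B * seq B)) (u v w x y : seq B).

Lemma derives_trans Rl k1 k2 u v w :
  derives Rl k1 u v -> derives Rl k2 v w -> derives Rl (k1 + k2) u w.
Proof.
elim=> [u0 | k u0 v0 w0 H1 _ IH] H2 //=.
by apply: derivesS H1 (IH H2).
Qed.

Lemma one_step_sym Rl u v : one_step Rl u v -> one_step Rl v u.
Proof.
case=> [x [y [l [r [Hin [-> ->]]]]]].
exists x, y, r, l; split=> //; tauto.
Qed.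

Lemma derives_sym Rl k u v : derives Rl k u v -> derives Rl k v u.
Proof.
elim=> [u0 | k0 u0 v0 w0 H1 _ IH]; first exact: derives0.
have := derives_trans IH (derivesS (one_step_sym H1) (derives0 Rl u0)).
by rewrite addn1.
Qed.

Lemma one_step_ctx Rl x y u v : one_step Rl u v -> one_step Rl (x ++ u ++ y) (x ++ v ++ y).
Proof.
case=> [x0 [y0 [l [r [Hin [-> ->]]]]]].
exists (x ++ x0), (y0 ++ y), l, r; split=> //; split; by rewrite -!catA.
Qed.

Lemma derives_ctx Rl k x y u v : derives Rl k u v -> derives Rl k (x ++ u ++ y) (x ++ v ++ y).
Proof.
elim=> [u0 | k0 u0 v0 w0 H1 _ IH]; first exact: derives0.
exact: derivesS (one_step_ctx x y H1) IH.
Qed.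

Lemma area_refl Rl u : area_le Rl u u 0.
Proof. by exists 0; split=> //; apply: derives0. Qed.

Lemma area_trans Rl k1 k2 u v w :
  area_le Rl u v k1 -> area_le Rl v w k2 -> area_le Rl u w (k1 + k2).
Proof.
case=> [a [Ha Da]] [b [Hb Db]]; exists (a + b); split; first exact: leq_add.
exact: derives_trans Da Db.
Qed.

Lemma area_sym Rl k u v : area_le Rl u v k -> area_le Rl v u k.
Proof. by case=> [a [Ha Da]]; exists a; split=> //; apply: derives_sym. Qed.

Lemma area_ctx Rl k x y u v : area_le Rl u v k -> area_le Rl (x ++ u ++ y) (x ++ v ++ y) k.
Proof. by case=> [a [Ha Da]]; exists a; split=> //; apply: derives_ctx. Qed.

Lemma area_ctxl Rl k x u v : area_le Rl u v k -> area_le Rl (x ++ u) (x ++ v) k.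
Proof. by move=> H; have := area_ctx x [::] H; rewrite !cats0. Qed.

Lemma area_ctxr Rl k y u v : area_le Rl u v k -> area_le Rl (u ++ y) (v ++ y) k.
Proof. by move=> H; have := area_ctx [::] y H. Qed.

Lemma area_mono Rl k k' u v : k <= k' -> area_le Rl u v k -> area_le Rl u v k'.
Proof. by move=> Hk [a [Ha Da]]; exists a; split=> //; apply: leq_trans Hk. Qed.

Lemma area_eq Rl u v : u = v -> area_le Rl u v 0.
Proof. by move=> ->; apply: area_refl. Qed.

End Deriv.

Section Words.
Variables (M : monoid) (A : finType) (gen : A -> M).
Local Notation ev := (evalw gen).

Lemma ev_nil : ev [::] = mone M. Proof. by []. Qed.
Lemma ev_cons a w : ev (a :: w) = mmul (gen a) (ev w). Proof. by []. Qed.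

Lemma ev_cat u v : ev (u ++ v) = mmul (ev u) (ev v).
Proof.
elim: u => [|a u IH] /=; first by rewrite mmul1.
by rewrite IH mmulA.
Qed.

Definition geo (w : seq A) := forall w', ev w' = ev w -> size w <= size w'.

Lemma geo_le w w' : geo w -> ev w' = ev w -> size w <= size w'.
Proof. by move=> G E; exact: G. Qed.

Lemma geo_take i w : geo w -> geo (take i w).
Proof.
move=> G w' E.
have E2 : ev (w' ++ drop i w) = ev w by rewrite ev_cat E -ev_cat cat_take_drop.
have := G _ E2; rewrite size_cat.
have := cat_take_drop i w => /(congr1 size); rewrite size_cat => {1}<-.
by rewrite leq_add2r.
Qed.

Lemma geo_drop i w : geo w -> geo (drop i w).
Proof.
move=> G w' E.
have E2 : ev (take i w ++ w') = ev w by rewrite ev_cat E -ev_cat cat_take_drop.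
have := G _ E2; rewrite size_cat.
have := cat_take_drop i w => /(congr1 size); rewrite size_cat => {1}<-.
by rewrite leq_add2l.
Qed.

Lemma geo_exists_n n : forall w, size w <= n ->
  exists g, geo g /\ ev g = ev w /\ size g <= size w.
Proof.
elim: n => [|n IH] w Hw.
  exists w; split=> //; move=> w' _; by rewrite (leq_trans Hw).
case: (classic (geo w)) => G; first by exists w.
have [w' Hw'] : exists w', ev w' = ev w /\ size w' < size w.
  apply: NNPP => Hn; apply: G => w' E.
  rewrite leqNgt; apply/negP => Hl; apply: Hn; by exists w'.
case: Hw' => E Hl.
have [g [Gg [Eg Sg]]] := IH w' (leq_trans Hl Hw).
exists g; split=> //; split; first by rewrite Eg.
by rewrite (leq_trans Sg) // ltnW.
Qed.

Lemma geo_exists w : exists g, geo g /\ ev g = ev w /\ size g <= size w.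
Proof. exact: (@geo_exists_n (size w)). Qed.

Hypothesis LC : left_cancellative M.

Lemma ev_lcancel x u v : ev (x ++ u) = ev (x ++ v) -> ev u = ev v.
Proof. by rewrite !ev_cat => /LC. Qed.

Fixpoint pathw (x : M) (w : seq A) : seq M :=
  match w with
  | [::] => [::]
  | a :: w' => mmul x (gen a) :: pathw (mmul x (gen a)) w'
  end.

Lemma cpath_pathw x w : cpath gen x (pathw x w).
Proof.
elim: w x => [|a w IH] x //=; split; last exact: IH.
by exists a.
Qed.

Lemma last_pathw x w : last x (pathw x w) = mmul x (ev w).
Proof.
elim: w x => [|a w IH] x /=; first by rewrite mmulm1.
by rewrite IH mmulA.
Qed.

Lemma size_pathw x w : size (pathw x w) = size w.
Proof. by elim: w x => [|a w IH] x //=; rewrite IH. Qed.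

Lemma in_pathw x w v : List.In v (x :: pathw x w) ->
  exists i, i <= size w /\ v = mmul x (ev (take i w)).
Proof.
elim: w x => [|a w IH] x /=.
  case=> [<-|//]; exists 0; split=> //; by rewrite mmulm1.
case=> [<-|H]; first by exists 0; split=> //; rewrite mmulm1.
have [i [Hi ->]] := IH _ H.
exists i.+1; split=> //=. by rewrite mmulA.
Qed.

Lemma cpath_word x s : cpath gen x s ->
  exists w, size w = size s /\ last x s = mmul x (ev w).
Proof.
elim: s x => [|y s IH] x /=.
  by move=> _; exists [::]; rewrite mmulm1.
case=> [[a Ha] Hs].
have [w [Hw Hl]] := IH _ Hs.
exists (a :: w); split; first by rewrite /= Hw.
by rewrite Hl -Ha /= mmulA.
Qed.

Lemma dist_le_word x y n : dist_le gen x y n ->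
  exists c, size c <= n /\ mmul x (ev c) = y.
Proof.
case=> [s [Hs [Hl Hn]]].
have [w [Hw E]] := cpath_word Hs.
by exists w; rewrite Hw; split=> //; rewrite -E.
Qed.

Lemma geodesic_geo x w : geo w -> geodesic gen (x, pathw x w).
Proof.
move=> G; split; first exact: cpath_pathw.
move=> s Hs Hl.
have [w' [Hw' E]] := cpath_word Hs.
rewrite /plen /= size_pathw -Hw'.
apply: G; apply: (LC (m:=x)).
by rewrite -E Hl /pend /= last_pathw.
Qed.

End Words.

Section Thin.
Variables (M : monoid) (A : finType) (gen : A -> M).
Local Notation ev := (evalw gen).
Hypothesis LC : left_cancellative M.
Variables (delta : R) (dd : nat).
Hypothesis Hdd : forall n : nat, Rle (INR n) delta -> n <= dd.
Hypothesis SH : strongly_hyperbolic gen delta.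

Definition tri (p q r : seq A) := geo gen p /\ geo gen q /\ geo gen r /\ ev (p ++ q) = ev r.

Lemma pathw_in x w i : i <= size w -> List.In (mmul x (ev (take i w))) (x :: pathw gen x w).
Proof.
elim: w x i => [|a w IH] x [|i] //= Hi; try by left; rewrite mmulm1.
right. rewrite mmulA. exact: IH.
Qed.

Lemma out_ball_w x w y : in_out_ball gen delta (x, pathw gen x w) y ->
  exists i c, i <= size w /\ geo gen c /\ size c <= dd /\
    mmul (mmul x (ev (take i w))) (ev c) = y.
Proof.
case=> [v [Hv [n [Hn Hd]]]].
have [i [Hi Ev]] := in_pathw Hv; subst v.
have [c [Hc E]] := dist_le_word Hd.
have [g [Gg [Eg Sg]]] := geo_exists gen c.
exists i, g; split=> //; split=> //; split; last by rewrite Eg.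
by rewrite (leq_trans Sg) // (leq_trans Hc) // Hdd.
Qed.

Lemma in_ball_w x w y : in_in_ball gen delta (x, pathw gen x w) y ->
  exists i c, i <= size w /\ geo gen c /\ size c <= dd /\
    mmul y (ev c) = mmul x (ev (take i w)).
Proof.
case=> [v [Hv [n [Hn Hd]]]].
have [i [Hi Ev]] := in_pathw Hv; subst v.
have [c [Hc E]] := dist_le_word Hd.
have [g [Gg [Eg Sg]]] := geo_exists gen c.
exists i, g; split=> //; split=> //; split; last by rewrite Eg.
by rewrite (leq_trans Sg) // (leq_trans Hc) // Hdd.
Qed.

Lemma thin_of_tri p q r : tri p q r ->
  thin_triangle gen delta (mone M, pathw gen (mone M) p)
     (ev p, pathw gen (ev p) q) (mone M, pathw gen (mone M) r).
Proof.
case=> [Gp [Gq [Gr E]]]; apply: SH.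
split; first exact: geodesic_geo.
split; first exact: geodesic_geo.
split; first exact: geodesic_geo.
rewrite /pend /pstart /= !last_pathw mmul1; split=> //; split=> //.
by rewrite -ev_cat E mmul1.
Qed.

Definition near (u v : seq A) := exists c, geo gen c /\ size c <= dd /\ ev (u ++ c) = ev v.

Lemma thinW1 p q r j : tri p q r -> j <= size r ->
  (exists i, i <= size p /\ near (take i p) (take j r)) \/
  (exists t, t <= size q /\ near (take j r) (p ++ take t q)).
Proof.
move=> T Hj; have [H1 _] := thin_of_tri T.
case: (H1 _ (pathw_in (mone M) Hj)) => H.
  left; have [i [c [Hi [Gc [Sc Ec]]]]] := out_ball_w H.
  exists i; split=> //; exists c; do 2 split=> //.
  by rewrite !mmul1 in Ec; rewrite ev_cat Ec.
right; have [t [c [Ht [Gc [Sc Ec]]]]] := in_ball_w H.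
exists t; split=> //; exists c; do 2 split=> //.
by rewrite !mmul1 in Ec; rewrite !ev_cat Ec.
Qed.

Lemma thinW2 p q r i : tri p q r -> i <= size p ->
  (exists j, j <= size r /\ near (take j r) (take i p)) \/
  (exists t, t <= size q /\ near (take i p) (p ++ take t q)).
Proof.
move=> T Hi; have [_ [H2 _]] := thin_of_tri T.
case: (H2 _ (pathw_in (mone M) Hi)) => H.
  left; have [j [c [Hj [Gc [Sc Ec]]]]] := out_ball_w H.
  exists j; split=> //; exists c; do 2 split=> //.
  by rewrite !mmul1 in Ec; rewrite ev_cat Ec.
right; have [t [c [Ht [Gc [Sc Ec]]]]] := in_ball_w H.
exists t; split=> //; exists c; do 2 split=> //.
by rewrite !mmul1 in Ec; rewrite !ev_cat Ec.
Qed.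

Lemma thinW3 p q r t : tri p q r -> t <= size q ->
  (exists i, i <= size p /\ near (take i p) (p ++ take t q)) \/
  (exists j, j <= size r /\ near (p ++ take t q) (take j r)).
Proof.
move=> T Ht; have [_ [_ H3]] := thin_of_tri T.
case: (H3 _ (pathw_in (ev p) Ht)) => H.
  left; have [i [c [Hi [Gc [Sc Ec]]]]] := out_ball_w H.
  exists i; split=> //; exists c; do 2 split=> //.
  by rewrite !mmul1 in Ec; rewrite !ev_cat Ec.
right; have [j [c [Hj [Gc [Sc Ec]]]]] := in_ball_w H.
exists j; split=> //; exists c; do 2 split=> //.
by rewrite !mmul1 in Ec; rewrite ev_cat ev_cat Ec.
Qed.

End Thin.

Section Decomp.
Variable B : Type.
Variable Rl : seq (seq B * seq B).
Implicit Types (p q r c s e : seq B).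

Lemma dec_Ra p q r c s i j kA kB kC :
  area_le Rl (take i p ++ c) (take j r) kA ->
  area_le Rl (drop i p ++ q) s kB ->
  area_le Rl (c ++ drop j r) s kC ->
  area_le Rl (p ++ q) r (kA + kB + kC).
Proof.
move=> HA HB HC.
have E1 : p ++ q = take i p ++ (drop i p ++ q) by rewrite catA cat_take_drop.
have H1 := area_ctxl (take i p) HB.
have H2 := area_ctxl (take i p) (area_sym HC).
have H3 := area_ctxr (drop j r) HA.
rewrite cat_take_drop in H3.
rewrite E1; apply: (area_mono (k := kB + kC + kA)); first lia.
apply: area_trans (area_trans H1 H2) _; by rewrite catA.
Qed.

Lemma dec_Rb p q r c s t j kA kB kC :
  area_le Rl (p ++ take t q) s kA ->
  area_le Rl (take j r ++ c) s kB ->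
  area_le Rl (c ++ drop t q) (drop j r) kC ->
  area_le Rl (p ++ q) r (kA + kB + kC).
Proof.
move=> HA HB HC.
have E1 : p ++ q = (p ++ take t q) ++ drop t q by rewrite -catA cat_take_drop.
have H1 := area_ctxr (drop t q) HA.
have H2 := area_ctxr (drop t q) (area_sym HB).
have H3 := area_ctxl (take j r) HC.
rewrite cat_take_drop in H3.
rewrite E1; apply: area_trans (area_trans H1 H2) _; by rewrite -catA.
Qed.

Lemma dec_Pa p q r c s i j kA kB kC :
  area_le Rl (take j r ++ c) (take i p) kA ->
  area_le Rl (c ++ drop i p) s kB ->
  area_le Rl (s ++ q) (drop j r) kC ->
  area_le Rl (p ++ q) r (kA + kB + kC).
Proof.
move=> HA HB HC.
have E1 : p ++ q = take i p ++ (drop i p ++ q) by rewrite catA cat_take_drop.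
have H1 := area_ctxr (drop i p ++ q) (area_sym HA).
have H2 := area_ctxl (take j r) (area_ctxr q HB).
have H3 := area_ctxl (take j r) HC.
rewrite cat_take_drop in H3.
rewrite E1; apply: area_trans (area_trans H1 _) H3.
by rewrite -!catA in H2 *.
Qed.

Lemma dec_B1 p q r c s i t kA kB kC :
  area_le Rl (drop i p ++ take t q) c kA ->
  area_le Rl (take i p ++ c) s kB ->
  area_le Rl (s ++ drop t q) r kC ->
  area_le Rl (p ++ q) r (kA + kB + kC).
Proof.
move=> HA HB HC.
have E1 : p ++ q = take i p ++ (drop i p ++ take t q) ++ drop t q
  by rewrite -catA cat_take_drop catA cat_take_drop.
have H1 := area_ctx (take i p) (drop t q) HA.
have H2 := area_ctxr (drop t q) HB.
rewrite E1; apply: area_trans (area_trans H1 _) HC.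
by rewrite catA.
Qed.

Lemma dec_B2 p q r e i kA kB :
  area_le Rl (drop i p ++ q) e kA ->
  area_le Rl (take i p ++ e) r kB ->
  area_le Rl (p ++ q) r (kA + kB + 0).
Proof.
move=> HA HB.
have E1 : p ++ q = take i p ++ (drop i p ++ q) by rewrite catA cat_take_drop.
rewrite E1 addn0; exact: area_trans (area_ctxl _ HA) HB.
Qed.

Lemma dec_D1 p q r c e i t kA kB kC :
  area_le Rl (drop i p ++ take t q) c kA ->
  area_le Rl (c ++ drop t q) e kB ->
  area_le Rl (take i p ++ e) r kC ->
  area_le Rl (p ++ q) r (kA + kB + kC).
Proof.
move=> HA HB HC.
have E1 : p ++ q = take i p ++ (drop i p ++ take t q) ++ drop t q
  by rewrite -catA cat_take_drop catA cat_take_drop.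
have H1 := area_ctx (take i p) (drop t q) HA.
have H2 := area_ctxl (take i p) HB.
rewrite E1; apply: area_trans (area_trans H1 H2) HC.
Qed.

Lemma dec_Qb p q r c s t j kA kB kC :
  area_le Rl (take t q ++ c) s kA ->
  area_le Rl (p ++ s) (take j r) kB ->
  area_le Rl (c ++ drop j r) (drop t q) kC ->
  area_le Rl (p ++ q) r (kA + kB + kC).
Proof.
move=> HA HB HC.
have H1 : area_le Rl (p ++ (take t q ++ drop t q)) (p ++ ((take t q ++ c) ++ drop j r)) kC.
  have X1 := area_ctxl (take t q) (area_sym HC); have X2 := area_ctxl p X1.
  by rewrite -(catA (take t q)).
have H2 := area_ctxl p (area_ctxr (drop j r) HA).
have H3 : area_le Rl (p ++ (s ++ drop j r)) r kB.
  rewrite catA -{2}(cat_take_drop j r); exact: area_ctxr _ HB.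
rewrite -{1}(cat_take_drop t q); apply: (area_mono (k := kC + kA + kB)); first lia.
exact: area_trans (area_trans H1 H2) H3.
Qed.

End Decomp.

Lemma pow6_sum (s1 s2 s3 n K2 : nat) :
  7 * s1 <= 6 * n -> 7 * s2 <= 6 * n -> 7 * s3 <= 6 * n ->
  s1 + s2 + s3 <= 2 * n + K2 -> 10 * K2 <= n ->
  s1 ^ 6 + s2 ^ 6 + s3 ^ 6 <= n ^ 6.
Proof.
move=> H1 H2 H3 Hs HK.
have P (s : nat) : 7 * s <= 6 * n -> 7 ^ 5 * s ^ 6 <= 6 ^ 5 * (s * n ^ 5).
  move=> Hs'.
  have h : 7 ^ 5 * s ^ 5 <= 6 ^ 5 * n ^ 5 by rewrite -!expnMn leq_exp2r.
  have := leq_mul (leqnn s) h.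
  by rewrite (expnS s 5) mulnCA [6 ^ 5 * (s * _)]mulnCA.
have := P _ H1; have := P _ H2; have := P _ H3.
set X := n ^ 5.
have HX : (s1 + s2 + s3) * X <= (2 * n + K2) * X by rewrite leq_mul2r Hs orbT.
have HY : (10 * (2 * n + K2)) * X <= (21 * n) * X by rewrite leq_mul2r; apply/orP; right; lia.
have E : n ^ 6 = n * X by rewrite /X expnS.
rewrite E. move: HX HY. rewrite /X. generalize (n ^ 5) => Z. nia.
Qed.

Section TriArea.
Variables (M : monoid) (A : finType) (gen : A -> M).
Local Notation ev := (evalw gen).
Hypothesis LC : left_cancellative M.
Variables (delta : R) (dd : nat).
Hypothesis Hdd : forall n : nat, Rle (INR n) delta -> n <= dd.
Hypothesis SH : strongly_hyperbolic gen delta.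
Variable Rl : seq (seq A * seq A).
Variable KK : nat.
Hypothesis Hshort : forall u v, ev u = ev v -> size u <= KK -> size v <= KK -> area_le Rl u v 1.

Definition K1 := 30 * dd + 30.
Definition N0 := 10 * K1 + 1.
Hypothesis HKK : N0 <= KK.

Local Notation tri := (tri gen).
Definition perim (p q r : seq A) := size p + size q + size r.

Definition IHyp n := forall p q r, tri p q r -> perim p q r < n ->
  area_le Rl (p ++ q) r ((perim p q r) ^ 6).

Lemma piece n x y z : IHyp n -> tri x y z -> 6 * perim x y z <= 5 * n + K1 -> N0 <= n ->
  area_le Rl (x ++ y) z ((perim x y z) ^ 6).
Proof. move=> IH T H1 H2; apply: IH T _; rewrite /N0 in H2; lia. Qed.

Lemma finish (u v : seq A) n s1 s2 s3 :
  area_le Rl u v (s1 ^ 6 + s2 ^ 6 + s3 ^ 6) ->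
  6 * s1 <= 5 * n + K1 -> 6 * s2 <= 5 * n + K1 -> 6 * s3 <= 5 * n + K1 ->
  s1 + s2 + s3 <= 2 * n + K1 -> N0 <= n -> area_le Rl u v (n ^ 6).
Proof.
move=> H h1 h2 h3 hs hn; apply: area_mono H.
rewrite /N0 in hn.
apply: (@pow6_sum _ _ _ _ K1); lia.
Qed.

Lemma tri_geo p q r : tri p q r -> geo gen p /\ geo gen q /\ geo gen r.
Proof. by case=> [? [? [? _]]]. Qed.

Lemma mk_tri p q r : geo gen p -> geo gen q -> geo gen r -> ev (p ++ q) = ev r -> tri p q r.
Proof. by move=> *; do 3 split=> //. Qed.

Lemma tri_ineq p q r : tri p q r -> size r <= size p + size q.
Proof. case=> [_ [_ [Gr E]]]; rewrite -size_cat; exact: geo_le Gr E. Qed.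

Lemma geo_sz (g w : seq A) : geo gen g -> ev w = ev g -> size g <= size w.
Proof. exact: geo_le. Qed.

Ltac szs := rewrite ?size_cat ?size_drop ?size_takel //.

Lemma case_R n p q r : IHyp n -> tri p q r -> perim p q r = n -> N0 <= n ->
  size p <= size r -> size q <= size r -> area_le Rl (p ++ q) r (n ^ 6).
Proof.
move=> IH T Hn HN Hpr Hqr.
have [Gp [Gq Gr]] := tri_geo T.
have Etri : ev (p ++ q) = ev r by case: T => [_ [_ [_ ?]]].
have Hrpq := tri_ineq T.
have HK1 : K1 = 30 * dd + 30 by [].
have HN0 : N0 = 10 * K1 + 1 by [].
set j0 := size r %/ 2.
have Hj0 : j0 <= size r by rewrite /j0; lia.
have Hj0b : 2 * j0 <= size r <= 2 * j0 + 1 by rewrite /j0; lia.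
clearbody j0.
have Gtr := geo_take (i:=j0) Gr; have Gdr := geo_drop (i:=j0) Gr.
have Str : size (take j0 r) = j0 by szs.
have Sdr : size (drop j0 r) = size r - j0 by szs.
case: (thinW1 LC Hdd SH T Hj0).
- move=> [i [Hi [c [Gc [Sc Ec]]]]].
  have Gtp := geo_take (i:=i) Gp; have Gdp := geo_drop (i:=i) Gp.
  have Stp : size (take i p) = i by szs.
  have Sdp : size (drop i p) = size p - i by szs.
  have [s [Gs [Es Ss]]] := geo_exists gen (drop i p ++ q).
  have Ec2 : ev (c ++ drop j0 r) = ev s.
    apply: (ev_lcancel LC (x := take i p)).
    by rewrite catA ev_cat Ec -ev_cat cat_take_drop ev_cat Es -ev_cat catA cat_take_drop.
  have h1 := geo_sz Gtr Ec; have h2 := geo_sz Gs Ec2.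
  move: Ss h1 h2; szs => Ss h1 h2.
  have TA : tri (take i p) c (take j0 r) by apply: mk_tri.
  have TB : tri (drop i p) q s by apply: mk_tri.
  have TC : tri c (drop j0 r) s by apply: mk_tri.
  move: Hn; rewrite /perim => Hn.
  have PA := piece IH TA; have PB := piece IH TB; have PC := piece IH TC.
  move: PA PB PC; rewrite /perim Stp Sdp Str Sdr => PA PB PC.
  have HA := PA ltac:(lia) HN; have HB := PB ltac:(lia) HN; have HC := PC ltac:(lia) HN.
  apply: (finish (dec_Ra HA HB HC)) => //; lia.
- move=> [t [Ht [c [Gc [Sc Ec]]]]].
  have Gtq := geo_take (i:=t) Gq; have Gdq := geo_drop (i:=t) Gq.
  have Stq : size (take t q) = t by szs.
  have Sdq : size (drop t q) = size q - t by szs.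
  have [s [Gs [Es Ss]]] := geo_exists gen (p ++ take t q).
  have Ec1 : ev (take j0 r ++ c) = ev s by rewrite Ec Es.
  have Ec2 : ev (c ++ drop t q) = ev (drop j0 r).
    apply: (ev_lcancel LC (x := take j0 r)).
    by rewrite [in RHS]cat_take_drop catA ev_cat Ec -ev_cat -catA cat_take_drop Etri.
  have h1 := geo_sz Gs Ec1; have h2 := geo_sz Gdr Ec2.
  move: Ss h1 h2; szs => Ss h1 h2.
  have TA : tri p (take t q) s by apply: mk_tri.
  have TB : tri (take j0 r) c s by apply: mk_tri.
  have TC : tri c (drop t q) (drop j0 r) by apply: mk_tri.
  move: Hn; rewrite /perim => Hn.
  have PA := piece IH TA; have PB := piece IH TB; have PC := piece IH TC.
  move: PA PB PC; rewrite /perim Stq Sdq Str Sdr => PA PB PC.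
  have HA := PA ltac:(lia) HN; have HB := PB ltac:(lia) HN; have HC := PC ltac:(lia) HN.
  apply: (finish (dec_Rb HA HB HC)) => //; lia.
Qed.


Lemma finish2 (u v : seq A) n s1 s2 :
  area_le Rl u v (s1 ^ 6 + s2 ^ 6 + 0) ->
  6 * s1 <= 5 * n + K1 -> 6 * s2 <= 5 * n + K1 ->
  s1 + s2 <= 2 * n + K1 -> N0 <= n -> area_le Rl u v (n ^ 6).
Proof.
move=> H h1 h2 hs hn; apply: (@finish u v n s1 s2 0) => //; lia.
Qed.

Lemma case_P n p q r : IHyp n -> tri p q r -> perim p q r = n -> N0 <= n ->
  size q <= size p -> size r < size p -> area_le Rl (p ++ q) r (n ^ 6).
Proof.
move=> IH T Hn HN Hqp Hrp.
have [Gp [Gq Gr]] := tri_geo T.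
have Etri : ev (p ++ q) = ev r by case: T => [_ [_ [_ ?]]].
have Hrpq := tri_ineq T.
have HK1 : K1 = 30 * dd + 30 by [].
have HN0 : N0 = 10 * K1 + 1 by [].
set i0 := size p %/ 2.
have Hi0 : i0 <= size p by rewrite /i0; lia.
have Hi0b : 2 * i0 <= size p <= 2 * i0 + 1 by rewrite /i0; lia.
clearbody i0.
have Gtp := geo_take (i:=i0) Gp; have Gdp := geo_drop (i:=i0) Gp.
have Stp : size (take i0 p) = i0 by szs.
have Sdp : size (drop i0 p) = size p - i0 by szs.
move: Hn; rewrite /perim => Hn.
case: (thinW2 LC Hdd SH T Hi0).
- move=> [j [Hj [c [Gc [Sc Ec]]]]].
  have Gtr := geo_take (i:=j) Gr; have Gdr := geo_drop (i:=j) Gr.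
  have Str : size (take j r) = j by szs.
  have Sdr : size (drop j r) = size r - j by szs.
  have [s [Gs [Es Ss]]] := geo_exists gen (c ++ drop i0 p).
  have E1 : ev (take j r ++ s) = ev p.
    by rewrite ev_cat Es -ev_cat catA ev_cat Ec -ev_cat cat_take_drop.
  have Ec3 : ev (s ++ q) = ev (drop j r).
    apply: (ev_lcancel LC (x := take j r)).
    by rewrite [in RHS]cat_take_drop catA ev_cat E1 -ev_cat Etri.
  have h1 := geo_sz Gtp Ec; have h3 := geo_sz Gdr Ec3.
  move: Ss h1 h3; szs => Ss h1 h3.
  have TA : tri (take j r) c (take i0 p) by apply: mk_tri.
  have TB : tri c (drop i0 p) s by apply: mk_tri.
  have TC : tri s q (drop j r) by apply: mk_tri.
  have PA := piece IH TA; have PB := piece IH TB; have PC := piece IH TC.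
  move: PA PB PC; rewrite /perim Stp Sdp Str Sdr => PA PB PC.
  have HA := PA ltac:(lia) HN; have HB := PB ltac:(lia) HN; have HC := PC ltac:(lia) HN.
  apply: (finish (dec_Pa HA HB HC)) => //; lia.
- move=> [t [Ht [c [Gc [Sc Ec]]]]].
  have Gtq := geo_take (i:=t) Gq; have Gdq := geo_drop (i:=t) Gq.
  have Stq : size (take t q) = t by szs.
  have Sdq : size (drop t q) = size q - t by szs.
  have Ecc : ev (drop i0 p ++ take t q) = ev c.
    apply: (ev_lcancel LC (x := take i0 p)).
    by rewrite catA cat_take_drop Ec.
  have [s [Gs [Es Ss]]] := geo_exists gen (p ++ take t q).
  have Es2 : ev (take i0 p ++ c) = ev s by rewrite Ec Es.
  have Es3 : ev (s ++ drop t q) = ev r by rewrite ev_cat Es -ev_cat -catA cat_take_drop Etri.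
  have h1 := geo_sz Gs Es2; have h2 := geo_sz Gr Es3.
  move: Ss h1 h2; szs => Ss h1 h2.
  case: (leqP (6 * (i0 + size c + size s)) (5 * n + K1)) => Hch.
  + have TA : tri (drop i0 p) (take t q) c by apply: mk_tri.
    have TB : tri (take i0 p) c s by apply: mk_tri.
    have TC : tri s (drop t q) r by apply: mk_tri.
    have PA := piece IH TA; have PB := piece IH TB; have PC := piece IH TC.
    move: PA PB PC; rewrite /perim Stp Sdp Stq Sdq => PA PB PC.
    have HA := PA ltac:(lia) HN; have HB := PB ltac:(lia) HN; have HC := PC ltac:(lia) HN.
    apply: (finish (dec_B1 HA HB HC)) => //; lia.
  + have [e [Ge [Ee Se]]] := geo_exists gen (drop i0 p ++ q).
    have Ee2 : ev (c ++ drop t q) = ev e.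
      by rewrite Ee ev_cat -Ecc -ev_cat -catA cat_take_drop.
    have Ee3 : ev (take i0 p ++ e) = ev r.
      by rewrite ev_cat Ee -ev_cat catA cat_take_drop Etri.
    have h4 := geo_sz Ge Ee2; have h5 := geo_sz Gr Ee3.
    move: h4 h5; szs => h4 h5.
    have TA : tri (drop i0 p) q e by apply: mk_tri.
    have TB : tri (take i0 p) e r by apply: mk_tri.
    have PA := piece IH TA; have PB := piece IH TB.
    move: PA PB; rewrite /perim Stp Sdp => PA PB.
    have HA := PA ltac:(lia) HN; have HB := PB ltac:(lia) HN.
    apply: (finish2 (dec_B2 HA HB)) => //; lia.
Qed.

Lemma case_Q n p q r : IHyp n -> tri p q r -> perim p q r = n -> N0 <= n ->
  size p < size q -> size r < size q -> area_le Rl (p ++ q) r (n ^ 6).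
Proof.
move=> IH T Hn HN Hpq Hrq.
have [Gp [Gq Gr]] := tri_geo T.
have Etri : ev (p ++ q) = ev r by case: T => [_ [_ [_ ?]]].
have Hrpq := tri_ineq T.
have HK1 : K1 = 30 * dd + 30 by [].
have HN0 : N0 = 10 * K1 + 1 by [].
set t0 := size q %/ 2.
have Ht0 : t0 <= size q by rewrite /t0; lia.
have Ht0b : 2 * t0 <= size q <= 2 * t0 + 1 by rewrite /t0; lia.
clearbody t0.
have Gtq := geo_take (i:=t0) Gq; have Gdq := geo_drop (i:=t0) Gq.
have Stq : size (take t0 q) = t0 by szs.
have Sdq : size (drop t0 q) = size q - t0 by szs.
move: Hn; rewrite /perim => Hn.
case: (thinW3 LC Hdd SH T Ht0).
- move=> [i [Hi [c [Gc [Sc Ec]]]]].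
  have Gtp := geo_take (i:=i) Gp; have Gdp := geo_drop (i:=i) Gp.
  have Stp : size (take i p) = i by szs.
  have Sdp : size (drop i p) = size p - i by szs.
  have Ecc : ev (drop i p ++ take t0 q) = ev c.
    apply: (ev_lcancel LC (x := take i p)).
    by rewrite catA cat_take_drop Ec.
  have [s [Gs [Es Ss]]] := geo_exists gen (take i p ++ c).
  have Es3 : ev (s ++ drop t0 q) = ev r by rewrite ev_cat Es Ec -ev_cat -catA cat_take_drop Etri.
  have h2 := geo_sz Gr Es3.
  move: Ss h2; szs => Ss h2.
  case: (leqP (6 * (i + size c + size s)) (5 * n + K1)) => Hch.
  + have TA : tri (drop i p) (take t0 q) c by apply: mk_tri.
    have TB : tri (take i p) c s by apply: mk_tri.
    have TC : tri s (drop t0 q) r by apply: mk_tri.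
    have PA := piece IH TA; have PB := piece IH TB; have PC := piece IH TC.
    move: PA PB PC; rewrite /perim Stp Sdp Stq Sdq => PA PB PC.
    have HA := PA ltac:(lia) HN; have HB := PB ltac:(lia) HN; have HC := PC ltac:(lia) HN.
    apply: (finish (dec_B1 HA HB HC)) => //; lia.
  + have [e [Ge [Ee Se]]] := geo_exists gen (c ++ drop t0 q).
    have Ee3 : ev (take i p ++ e) = ev r.
      by rewrite ev_cat Ee -ev_cat catA ev_cat Ec -ev_cat -catA cat_take_drop Etri.
    have h5 := geo_sz Gr Ee3.
    move: Se h5; szs => Se h5.
    have TA : tri (drop i p) (take t0 q) c by apply: mk_tri.
    have TB : tri c (drop t0 q) e by apply: mk_tri.
    have TC : tri (take i p) e r by apply: mk_tri.
    have PA := piece IH TA; have PB := piece IH TB; have PC := piece IH TC.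
    move: PA PB PC; rewrite /perim Stp Sdp Stq Sdq => PA PB PC.
    have HA := PA ltac:(lia) HN; have HB := PB ltac:(lia) HN; have HC := PC ltac:(lia) HN.
    apply: (finish (dec_D1 HA HB HC)) => //; lia.
- move=> [j [Hj [c [Gc [Sc Ec]]]]].
  have Gtr := geo_take (i:=j) Gr; have Gdr := geo_drop (i:=j) Gr.
  have Str : size (take j r) = j by szs.
  have Sdr : size (drop j r) = size r - j by szs.
  have [s [Gs [Es Ss]]] := geo_exists gen (take t0 q ++ c).
  have Es2 : ev (p ++ s) = ev (take j r) by rewrite ev_cat Es -ev_cat catA Ec.
  have Ec3 : ev (c ++ drop j r) = ev (drop t0 q).
    apply: (ev_lcancel LC (x := p ++ take t0 q)).
    by rewrite catA ev_cat Ec -ev_cat cat_take_drop -catA cat_take_drop Etri.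
  have h3 := geo_sz Gdq Ec3.
  move: Ss h3; szs => Ss h3.
  have TA : tri (take t0 q) c s by apply: mk_tri.
  have TB : tri p s (take j r) by apply: mk_tri.
  have TC : tri c (drop j r) (drop t0 q) by apply: mk_tri.
  have PA := piece IH TA; have PB := piece IH TB; have PC := piece IH TC.
  move: PA PB PC; rewrite /perim Stq Sdq Str Sdr => PA PB PC.
  have HA := PA ltac:(lia) HN; have HB := PB ltac:(lia) HN; have HC := PC ltac:(lia) HN.
  apply: (finish (dec_Qb HA HB HC)) => //; lia.
Qed.


Lemma IHyp_all n : IHyp n.
Proof.
elim: n => [|n IH] p q r T Hlt; first by rewrite ltn0 in Hlt.
case: (ltnP (perim p q r) n) => Hn; first exact: IH.
have En : perim p q r = n by lia.
have HN0 : N0 = 10 * K1 + 1 by [].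
case: (ltnP n N0) => HN.
- case: (posnP n) => Hn0.
  + move: En; rewrite Hn0 /perim => E.
    have Ep : p = [::] by apply/nilP; rewrite /nilp; lia.
    have Eq : q = [::] by apply/nilP; rewrite /nilp; lia.
    have Er : r = [::] by apply/nilP; rewrite /nilp; lia.
    by rewrite Ep Eq Er; apply: area_refl.
  + have Etri : ev (p ++ q) = ev r by case: T => [_ [_ [_ ?]]].
    apply: (area_mono (k := 1)); first by rewrite En expn_gt0 Hn0.
    apply: Hshort => //; rewrite ?size_cat; move: En; rewrite /perim; lia.
- rewrite En.
  case: (boolP ((size p <= size r) && (size q <= size r))) => Hc.
  + by case/andP: Hc => H1 H2; apply: case_R.
  + case: (leqP (size q) (size p)) => H1.
    * apply: case_P => //; move: Hc; rewrite negb_and -!ltnNge; case/orP=> h; lia.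
    * apply: case_Q => //; move: Hc; rewrite negb_and -!ltnNge; case/orP=> h; lia.
Qed.

Lemma tri_area p q r : tri p q r -> area_le Rl (p ++ q) r ((perim p q r) ^ 6).
Proof. by move=> T; apply: (@IHyp_all (perim p q r).+1). Qed.

Lemma split_arith a b n : a + b = n -> 4 * a <= 3 * n -> 4 * b <= 3 * n ->
  100 * a ^ 6 + 100 * b ^ 6 + (2 * n) ^ 6 <= 100 * n ^ 6.
Proof.
move=> Hab Ha Hb.
have P (s : nat) : 4 * s <= 3 * n -> 4 ^ 5 * s ^ 6 <= 3 ^ 5 * (s * n ^ 5).
  move=> Hs.
  have h : 4 ^ 5 * s ^ 5 <= 3 ^ 5 * n ^ 5 by rewrite -!expnMn leq_exp2r.
  have := leq_mul (leqnn s) h.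
  by rewrite (expnS s 5) mulnCA [3 ^ 5 * (s * _)]mulnCA.
have := P _ Ha; have := P _ Hb.
rewrite expnMn.
have E : n ^ 6 = n * n ^ 5 by rewrite expnS.
rewrite E. rewrite -Hab. generalize (n ^ 5) => Z. move=> *. nia.
Qed.

Lemma word_area_n m : forall w h, size w <= m -> geo gen h -> ev w = ev h ->
  area_le Rl w h (100 * (size w) ^ 6).
Proof.
elim: m => [|m IH] w h Hw Gh E.
  have Ew : w = [::] by apply/nilP; rewrite /nilp; lia.
  have Sh := geo_sz Gh E; rewrite Ew /= in Sh.
  have Eh : h = [::] by apply/nilP; rewrite /nilp; lia.
  by rewrite Ew Eh; apply: area_refl.
have Sh := geo_sz Gh E.
have HN0 : N0 = 10 * K1 + 1 by [].
have HK1 : K1 = 30 * dd + 30 by [].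
case: (leqP (size w) 1) => H1.
  case: (posnP (size w)) => H0.
    have Ew : w = [::] by apply/nilP; rewrite /nilp; lia.
    rewrite Ew /= in Sh; have Eh : h = [::] by apply/nilP; rewrite /nilp; lia.
    by rewrite Ew Eh; apply: area_refl.
  apply: (area_mono (k := 1)); first by have := expn_gt0 (size w) 6; rewrite H0 /=; lia.
  apply: Hshort => //; lia.
set k := size w %/ 2.
have Hk : 2 * k <= size w <= 2 * k + 1 by rewrite /k; lia.
clearbody k.
have [g1 [G1 [E1 S1]]] := geo_exists gen (take k w).
have [g2 [G2 [E2 S2]]] := geo_exists gen (drop k w).
have Stw : size (take k w) = k by rewrite size_takel //; lia.
have Sdw : size (drop k w) = size w - k by rewrite size_drop.
have A1 := IH (take k w) g1 ltac:(lia) G1 (esym E1).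
have A2 := IH (drop k w) g2 ltac:(lia) G2 (esym E2).
have T : tri g1 g2 h.
  apply: mk_tri => //; by rewrite ev_cat E1 E2 -ev_cat cat_take_drop.
have A3 := tri_area T.
have C1 := area_ctxr (drop k w) A1.
have C2 := area_ctxl g1 A2.
have := area_trans (area_trans C1 C2) A3.
rewrite cat_take_drop; apply: area_mono.
rewrite Stw Sdw.
have hp : perim g1 g2 h <= 2 * size w by rewrite /perim; lia.
have := split_arith (a := k) (b := size w - k) (n := size w) ltac:(lia) ltac:(lia) ltac:(lia).
have := leq_exp2r (perim g1 g2 h) (2 * size w) (isT : 0 < 6).
rewrite hp => /idP. lia.
Qed.

Lemma pow6_add a b : a ^ 6 + b ^ 6 <= (a + b) ^ 6.
Proof.
have ha : a ^ 6 <= a * (a + b) ^ 5.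
  by rewrite (expnS a 5) leq_mul2l leq_exp2r // leq_addr orbT.
have hb : b ^ 6 <= b * (a + b) ^ 5.
  by rewrite (expnS b 5) leq_mul2l leq_exp2r // leq_addl orbT.
rewrite (expnS (a + b) 5) mulnDl; exact: leq_add.
Qed.

Lemma equal_area u v : ev u = ev v -> area_le Rl u v (100 * (size u + size v) ^ 6).
Proof.
move=> E.
have [g [Gg [Eg Sg]]] := geo_exists gen u.
have A1 := word_area_n (leqnn (size u)) Gg (esym Eg).
have A2 := word_area_n (leqnn (size v)) Gg (etrans (esym E) (esym Eg)).
have := area_trans A1 (area_sym A2).
apply: area_mono; have := pow6_add (size u) (size v); lia.
Qed.

End TriArea.

Lemma In_of_mem (T : eqType) (x : T) (s : seq T) : x \in s -> List.In x s.
Proof.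
elim: s => [|y s IH] //=; rewrite inE => /orP [/eqP ->|H]; [by left | by right; apply: IH].
Qed.

Definition pb (P : Prop) : bool := if excluded_middle_informative P then true else false.
Lemma pbP (P : Prop) : pb P = true <-> P.
Proof. by rewrite /pb; case: (excluded_middle_informative P). Qed.

Section Rels.
Variables (M : monoid) (A : finType) (gen : A -> M).
Local Notation ev := (evalw gen).

Fixpoint allw (n : nat) : seq (seq A) :=
  match n with
  | 0 => [:: [::]]
  | n'.+1 => [::] :: flatten [seq [seq a :: w | w <- allw n'] | a <- enum A]
  end.

Lemma allw_in n w : size w <= n -> w \in allw n.
Proof.
elim: n w => [|n IH] [|a w] //= H.
rewrite inE; apply/orP; right.
apply/flatten_mapP; exists a; first by rewrite mem_enum.
by apply: map_f; apply: IH.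
Qed.

Definition rels (K : nat) : seq (seq A * seq A) :=
  [seq pr <- [seq (u, v) | u <- allw K, v <- allw K] | pb (ev pr.1 = ev pr.2)].


Lemma mem_In (T : eqType) (x : T) (s : seq T) : List.In x s -> x \in s.
Proof. elim: s => [|y s IH] //= [->|H]; rewrite inE ?eqxx //; apply/orP; right; exact: IH. Qed.

Lemma rels_eq K l r : List.In (l, r) (rels K) -> ev l = ev r.
Proof.
move/mem_In; rewrite mem_filter => /andP [H _]. by move/pbP: H.
Qed.

Lemma rels_in K u v : ev u = ev v -> size u <= K -> size v <= K -> List.In (u, v) (rels K).
Proof.
move=> E Hu Hv; apply: In_of_mem; rewrite mem_filter; apply/andP; split.
  by apply/pbP.
by apply/allpairsP; exists (u, v); split=> //=; apply: allw_in.
Qed.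

Lemma rels_short K u v : ev u = ev v -> size u <= K -> size v <= K -> area_le (rels K) u v 1.
Proof.
move=> E Hu Hv; exists 1; split=> //.
apply: (derivesS (v := v)); last exact: derives0.
exists [::], [::], u, v; split; first by left; apply: rels_in.
by rewrite !cats0.
Qed.

Lemma derives_ev (Rl : seq (seq A * seq A)) k u v :
  (forall l r, List.In (l, r) Rl -> ev l = ev r) -> derives Rl k u v -> ev u = ev v.
Proof.
move=> HR; elim=> [//|k0 u0 v0 w0 [x [y [l [r [Hin [-> ->]]]]]] _ <-].
rewrite !ev_cat; case: Hin => /HR ->//.
Qed.

End Rels.

Section RealPart.
Local Open Scope R_scope.
Lemma exponent_ge6 : Rle (INR 6) dehn_exponent.
Proof.
rewrite /dehn_exponent.
have E1 : INR 1 = 1 by [].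
have E3 : INR 3 = 3 by simpl; ring.
have E4 : INR 4 = 4 by simpl; ring.
have E5 : INR 5 = 5 by simpl; ring.
have E6 : INR 6 = 6 by simpl; ring.
rewrite E1 E3 E4 E5 E6.
have HL : 0 < ln (4 / 3) by rewrite -ln_1; apply: ln_increasing; lra.
have Hpow : (4 / 3) ^ 5 < 5 by simpl; lra.
have Hln : 5 * ln (4 / 3) <= ln 5.
  have -> : (5 = INR 5) by rewrite E5.
  rewrite -ln_pow; last lra.
  rewrite E5; left; apply: ln_increasing => //; apply: pow_lt; lra.
have Hd : 5 <= ln 5 / ln (4 / 3).
  apply Rmult_le_reg_r with (r := ln (4 / 3)) => //.
  rewrite /Rdiv Rmult_assoc Rinv_l; lra.
lra.
Qed.

Lemma INR_expn (m n : nat) : INR (m ^ n)%N = INR m ^ n.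
Proof.
elim: n => [|n IH]; first by rewrite expn0.
by rewrite expnS mult_INR IH /=.
Qed.

Lemma real_bound (c1 c2 : nat) : exists a : R, Rlt 0 a /\ forall j : nat,
  Rle (INR (c1 * j + c2 * j ^ 6)%N) (Rplus (Rmult a (Rpower (Rmult a (INR j)) dehn_exponent)) (Rmult a (INR j))).
Proof.
exists (INR c1 + INR c2 + 1).
have H1 := pos_INR c1; have H2 := pos_INR c2.
split; first lra.
move=> j.
rewrite plus_INR !mult_INR.
have -> : INR j * (INR j * (INR j * (INR j * (INR j * INR j)))) = INR j ^ 6 by simpl; ring.
set a := (INR c1 + INR c2 + 1).
have Ha : Rle 1 a by rewrite /a; lra.
have HJ := pos_INR j.
case: (posnP j) => Hj.
  rewrite Hj.
  have HP : 0 < Rpower (a * INR 0) dehn_exponent by rewrite /Rpower; apply: exp_pos.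
  move: HP; generalize (Rpower (a * INR 0) dehn_exponent) => X HP.
  rewrite /= in HP *. nra.
have HJ1 : Rle 1 (INR j) by apply: (le_INR 1); apply/leP; lia.
have HaJ : Rle 1 (a * INR j) by nra.
have Hp : Rle ((a * INR j) ^ 6) (Rpower (a * INR j) dehn_exponent).
  rewrite -Rpower_pow; last lra.
  by apply: Rle_Rpower => //; apply: exponent_ge6.
have HJ6 : Rle (INR j ^ 6) ((a * INR j) ^ 6).
  apply: pow_incr; split; first lra. nra.
have Hq : Rle (INR c2 * INR j ^ 6) (a * Rpower (a * INR j) dehn_exponent).
  apply: Rmult_le_compat; try lra.
  - apply: pow_le; lra.
  - rewrite /a; lra.
have Hr : Rle (INR c1 * INR j) (a * INR j) by apply: Rmult_le_compat_r; rewrite /a; lra.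
lra.
Qed.

End RealPart.

Lemma list_bound (X : Type) (s : seq X) (Q : X -> nat -> Prop) :
  (forall x k k', k <= k' -> Q x k -> Q x k') ->
  (forall x, List.In x s -> exists k, Q x k) ->
  exists K, forall x, List.In x s -> Q x K.
Proof.
move=> Hm; elim: s => [|y s IH] H; first by exists 0.
have [k Hk] := H y (or_introl erefl).
have [K HK] := IH (fun x Hx => H x (or_intror Hx)).
exists (k + K) => x [<-|Hx].
  by apply: Hm Hk; rewrite leq_addr.
by apply: Hm (HK x Hx); rewrite leq_addl.
Qed.

Section Transfer.
Variables (M : monoid) (A : finType) (gen : A -> M).
Variable RA : seq (seq A * seq A).
Variable C : nat.
Hypothesis HRA : forall l r, List.In (l, r) RA -> evalw gen l = evalw gen r.
Hypothesis Hgen : generates gen.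
Hypothesis Hcore : forall u v, evalw gen u = evalw gen v ->
  area_le RA u v (C * (size u + size v) ^ 6).
Variable P : fin_presentation M.

Local Notation B := (palph P).
Local Notation evB := (evalw (pgen (f:=P))).
Local Notation evA := (evalw gen).
Local Notation RP := (prels P).

Lemma transfer : exists c1 c2, forall u v : seq B, evB u = evB v ->
  area_le RP u v (c1 * (size u + size v) + c2 * (size u + size v) ^ 6).
Proof.
pose sg := fun b : B => proj1_sig (constructive_indefinite_description _ (Hgen (pgen b))).
have Esg : forall b, evA (sg b) = pgen b.
  by move=> b; rewrite /sg; case: (constructive_indefinite_description _ _).
pose ta := fun a : A => proj1_sig (constructive_indefinite_description _ (pgen_surj P (gen a))).
have Eta : forall a, evB (ta a) = gen a.
  by move=> a; rewrite /ta; case: (constructive_indefinite_description _ _).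
pose Fs := fun w : seq B => flatten (map sg w).
pose Ft := fun w : seq A => flatten (map ta w).
have EFs : forall w, evA (Fs w) = evB w.
  elim=> [|b w IH] //=; by rewrite ev_cat Esg -IH.
have EFt : forall w, evB (Ft w) = evA w.
  elim=> [|a w IH] //=; by rewrite ev_cat Eta -IH.
have Ftcat : forall x y, Ft (x ++ y) = Ft x ++ Ft y.
  by move=> x y; rewrite /Ft map_cat flatten_cat.
have [L HL] : exists L, forall b, size (sg b) <= L.
  have [L HL] := @list_bound B (enum B) (fun b k => size (sg b) <= k)
    (fun x k k' h1 h2 => leq_trans h2 h1) (fun x _ => ex_intro _ (size (sg x)) (leqnn _)).
  by exists L => b; apply: HL; apply: In_of_mem; rewrite mem_enum.
have SFs : forall w, size (Fs w) <= L * size w.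
  elim=> [|b w IH] //=; rewrite size_cat mulnS; exact: leq_add.
have [cb Hcb] : exists cb, forall b, area_le RP [:: b] (Ft (sg b)) cb.
  have Hex : forall b, List.In b (enum B) -> exists k, area_le RP [:: b] (Ft (sg b)) k.
    move=> b _.
    have E : evB [:: b] = evB (Ft (sg b)) by rewrite EFt Esg /= mmulm1.
    have [k Dk] := (@pker _ P _ _).1 E.
    by exists k; exists k; split.
  have [K HK] := @list_bound B (enum B) (fun b k => area_le RP [:: b] (Ft (sg b)) k)
    (fun x k k' h1 h2 => area_mono h1 h2) Hex.
  by exists K => b; apply: HK; apply: In_of_mem; rewrite mem_enum.
have Hw : forall w, area_le RP w (Ft (Fs w)) (cb * size w).
  elim=> [|b w IH] /=; first by rewrite muln0; apply: area_refl.
  rewrite Ftcat mulnS.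
  have H1 := area_ctxr w (Hcb b).
  have H2 := area_ctxl (Ft (sg b)) IH.
  exact: area_trans H1 H2.
have [cr Hcr] : exists cr, forall l r, List.In (l, r) RA -> area_le RP (Ft l) (Ft r) cr.
  have Hex : forall pr, List.In pr RA -> exists k, area_le RP (Ft pr.1) (Ft pr.2) k.
    move=> [l r] Hin /=.
    have E : evB (Ft l) = evB (Ft r) by rewrite !EFt; apply: HRA.
    have [k Dk] := (@pker _ P _ _).1 E.
    by exists k; exists k; split.
  have [K HK] := @list_bound (seq A * seq A) RA (fun pr k => area_le RP (Ft pr.1) (Ft pr.2) k)
    (fun x k k' h1 h2 => area_mono h1 h2) Hex.
  by exists K => l r Hin; apply: (HK (l, r)).
have Hder : forall k x y, derives RA k x y -> area_le RP (Ft x) (Ft y) (cr * k).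
  move=> k x y; elim=> [u0|k0 u0 v0 w0 [x0 [y0 [l [r [Hin [-> ->]]]]]] _ IH].
    by rewrite muln0; apply: area_refl.
  rewrite mulnS; apply: area_trans IH.
  rewrite !Ftcat; apply: area_ctx.
  by case: Hin => H; [apply: Hcr | apply: area_sym; apply: Hcr].
exists cb, (cr * C * L ^ 6) => u v E.
have EA : evA (Fs u) = evA (Fs v) by rewrite !EFs.
have [k [Hk Dk]] := Hcore EA.
have A1 := Hw u; have A2 := area_sym (Hw v).
have A3 := Hder _ _ _ Dk.
have := area_trans (area_trans A1 A3) A2.
apply: area_mono.
have h1 : size (Fs u) + size (Fs v) <= L * (size u + size v).
  by rewrite mulnDr; apply: leq_add.
have h2 : (size (Fs u) + size (Fs v)) ^ 6 <= L ^ 6 * (size u + size v) ^ 6.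
  by rewrite -expnMn leq_exp2r.
have h3 : cr * k <= cr * (C * (L ^ 6 * (size u + size v) ^ 6)).
  apply: leq_mul (leqnn cr) _; apply: (leq_trans Hk); exact: leq_mul (leqnn C) h2.
move: h3; set X := (size u + size v) ^ 6; set Y := L ^ 6 => h3.
have EE : cr * C * Y * X = cr * (C * (Y * X)) by rewrite !mulnA.
rewrite mulnDr EE; lia.
Qed.

End Transfer.

Theorem theorem5p6 (M : monoid) (A : finType) (gen : A -> M) (delta : R) :
  Rle 0 delta ->
  left_cancellative M ->
  generates gen ->
  strongly_hyperbolic gen delta ->
  inhabited (fin_presentation M) /\
  forall P : fin_presentation M, dehn_prec P (fun x => Rpower x dehn_exponent).
Proof.
move=> Hd LC Hgen SH.
have [dd Hdd0] := INR_unbounded delta.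
have Hdd : forall n : nat, Rle (INR n) delta -> n <= dd.
  move=> n Hn; apply: ltnW; apply/ltP; apply: INR_lt.
  exact: Rle_lt_trans Hn Hdd0.
pose KK := N0 dd.
have Hshort : forall u v, evalw gen u = evalw gen v -> size u <= KK -> size v <= KK ->
    area_le (rels gen KK) u v 1.
  by move=> u v; apply: rels_short.
have HKK : N0 dd <= KK by [].
have core : forall u v, evalw gen u = evalw gen v ->
    area_le (rels gen KK) u v (100 * (size u + size v) ^ 6).
  by move=> u v E; apply: (equal_area LC Hdd SH Hshort HKK E).
have pk : forall u v, evalw gen u = evalw gen v <-> exists k, derives (rels gen KK) k u v.
  move=> u v; split.
    by move/core => [k [_ D]]; exists k.
  move=> [k D]; apply: (derives_ev _ D); exact: rels_eq.
split.
  constructor; exact: (@FinPresentation M A gen (rels gen KK) Hgen pk).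
move=> P.
have [c1 [c2 Htr]] := @transfer M A gen (rels gen KK) 100 (@rels_eq _ _ gen KK) Hgen core P.
have [a [Ha Hb]] := real_bound c1 c2.
exists a; split=> // j u v Hj E.
exists (c1 * j + c2 * j ^ 6); split; last exact: Hb.
apply: area_mono (Htr u v E).
apply: leq_add; first by rewrite leq_mul2l Hj orbT.
by rewrite leq_mul2l leq_exp2r // Hj orbT.
Qed.
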